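(* Let $X$ be a topological space admitting a metrizable compactification $\tilde X$, and let $T\colon X\to X$ be continuous. If $d$ and $c$ are the restrictions to $X$ of metrics $\tilde d$ and $\tilde c$ on $\tilde X$ compatible with its topology, then $h^d(T)=h^c(T)$.
   Context: For a metric $d$ on $X$: $d_n(x,y)=\max_{0\le j<n}d(T^jx,T^jy)$, $\mathcal B_{d_n}(\varepsilon)$ is the family of open $d_n$-balls of radius $\varepsilon$ centered at points of $X$, $N(\mathcal A)$ denotes the least cardinality of a subcover of a cover $\mathcal A$, and the $d$-entropy is $h^d(T)=\sup_{\varepsilon>0}\lim_n\frac1n\log N(\mathcal B_{d_n}(\varepsilon))$. *)

(* Defs.v *)
From HB Require Import structures.
From mathcomp Require Import all_boot all_order all_algebra.
From mathcomp Require Import all_classical all_reals all_analysis.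
From mathcomp Require Import finmap.
Set Implicit Arguments. Unset Strict Implicit. Unset Printing Implicit Defensive.
Import Order.TTheory GRing.Theory Num.Theory.
Local Open Scope classical_set_scope.
Local Open Scope ring_scope.

Section Entropy.
Variable R : realType.

Definition is_metric (Y : Type) (d : Y -> Y -> R) : Prop :=
  [/\ forall x y, 0 <= d x y,
      forall x y, d x y = 0 <-> x = y,
      forall x y, d x y = d y x &
      forall x y z, d x z <= d x y + d y z].

Definition compatible_metric (Y : topologicalType) (d : Y -> Y -> R) : Prop :=
  is_metric d /\
  forall U : set Y, open U <->
    (forall y, U y -> exists2 r : R, 0 < r & [set z | d y z < r] `<=` U).

Definition embedding (X Y : topologicalType) (e : X -> Y) : Prop :=
  [/\ injective e, continuous e &
      forall U : set X, open U -> exists2 V : set Y, open V & e @` U = V `&` range e].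

(** ([Y], [e]) is a metrizable compactification of [X]; metrizability is
    witnessed separately by the compatible metrics given in the theorem. *)
Definition compactification (X Y : topologicalType) (e : X -> Y) : Prop :=
  [/\ compact [set: Y], embedding e & dense (range e)].

Variable X : choiceType.

Definition bowen (T : X -> X) (d : X -> X -> R) (n : nat) (x y : X) : R :=
  \big[Order.max/0]_(j < n) d (iter j T x) (iter j T y).

(** N(B_{d_n}(eps)): least cardinality of a subcover of the family of open
    d_n-balls of radius eps centred at points of X (a subfamily is given by a
    set of centres); +oo if there is no finite subcover. *)
Definition Ncover (T : X -> X) (d : X -> X -> R) (n : nat) (eps : R) : \bar R :=
  ereal_inf [set ((#|` F|)%:R)%:E | F in
     [set F : {fset X} | forall x : X, exists2 y, y \in F & bowen T d n y x < eps]].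

Definition cover_rate (T : X -> X) (d : X -> X -> R) (eps : R) (n : nat) : \bar R :=
  match Ncover T d n eps with
  | r%:E => (ln r / n%:R)%:E
  | +oo%E => +oo%E
  | -oo%E => -oo%E
  end.

(** d-entropy h^d(T) = sup_{eps>0} lim_n (1/n) log N(B_{d_n}(eps)),
    with lim read as limsup. *)
Definition d_entropy (T : X -> X) (d : X -> X -> R) : \bar R :=
  ereal_sup [set limn_esup (cover_rate T d eps) | eps in [set e : R | 0 < e]].

End Entropy.

(* Main.v *)
Require Import Defs.
From HB Require Import structures.
From mathcomp Require Import all_boot all_order all_algebra.
From mathcomp Require Import all_classical all_reals all_analysis.
From mathcomp Require Import finmap.
Import Order.TTheory GRing.Theory Num.Theory.
Local Open Scope classical_set_scope.
Local Open Scope ring_scope.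

Section S.
Variables (R : realType) (X : choiceType).

Lemma esup_mono (u v : (\bar R)^nat) : (forall n, (u n <= v n)%E) ->
  (limn_esup u <= limn_esup v)%E.
Proof.
move=> uv; rewrite !limn_esup_lim; apply: lee_lim; try exact: is_cvg_esups.
apply: nearW => n; apply: ge_ereal_sup => _ [k /= nk <-].
apply: le_trans (uv k) _; apply: ereal_sup_ubound; by exists k.
Qed.

Lemma Ncover_ge0 T (d : X -> X -> R) n eps : (0 <= Ncover T d n eps)%E.
Proof.
apply: le_ereal_inf_tmp => _ [F _ <-]; by rewrite lee_fin.
Qed.

Lemma Ncover_nat T (d : X -> X -> R) n eps r : Ncover T d n eps = r%:E ->
  r = 0 \/ 1 <= r.
Proof.
move=> E; have [r0|r0] := leP r 0.
  left; apply/eqP; rewrite eq_le r0 /=; have := Ncover_ge0 T d n eps; by rewrite E lee_fin.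
have [r1|r1] := leP 1 r; first by right.
exfalso.
have : (Ncover T d n eps < 1%:E)%E by rewrite E lte_fin.
move=> /ereal_inf_lt [_ [F HF <-]]; rewrite lte_fin.
rewrite (_ : 1 = 1%:R) // ltr_nat ltnS leqn0 => /eqP F0.
have : (Ncover T d n eps <= 0%:E)%E.
  apply: ge_ereal_inf; exists ((#|` F|)%:R)%:E; first by exists F.
  by rewrite F0.
by rewrite E lee_fin leNgt r0.
Qed.

Lemma ln_nat_ge0 T (d : X -> X -> R) n eps r : Ncover T d n eps = r%:E ->
  0 <= ln r.
Proof.
move=> /Ncover_nat [->|]; first by rewrite ln0.
exact: ln_ge0.
Qed.

Lemma Ncover_mono T (d c : X -> X -> R) n {eps delta} : 0 < eps ->
  (forall x y, d x y < delta -> c x y < eps) ->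
  (Ncover T c n eps <= Ncover T d n delta)%E.
Proof.
move=> e0 dc; apply: ereal_inf_le_tmp => _ [F HF <-]; exists F => //.
move=> x; have [y yF hy] := HF x; exists y => //.
rewrite /bowen; apply: bigmax_lt => // j _; apply: dc.
apply: le_lt_trans hy; rewrite /bowen.
exact: (le_bigmax _ (fun j : 'I_n => d (iter j T y) (iter j T x)) j).
Qed.

Lemma rate_mono T (d c : X -> X -> R) n {eps delta} : 0 < eps ->
  (forall x y, d x y < delta -> c x y < eps) ->
  (cover_rate T c eps n <= cover_rate T d delta n)%E.
Proof.
move=> e0 dc; have H := Ncover_mono T d c n e0 dc.
rewrite /cover_rate.
case Ed: (Ncover T d n delta) H => [r| |]; last first.
- by have := Ncover_ge0 T d n delta; rewrite Ed.
- by case: (Ncover T c n eps) => [?| |] _; rewrite ?leey.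
case Ec: (Ncover T c n eps) => [s| |] //; rewrite ?leNye //.
rewrite !lee_fin => sr.
apply: ler_wpM2r; first by rewrite invr_ge0.
have [s0|s0] := leP s 0.
  by rewrite (ln0 s0); exact: (ln_nat_ge0 _ _ _ _ _ Ed).
by rewrite ler_ln // posrE (lt_le_trans s0 sr).
Qed.

Lemma entropy_mono T (d c : X -> X -> R) :
  (forall eps, 0 < eps -> exists2 delta, 0 < delta &
     forall x y, d x y < delta -> c x y < eps) ->
  (d_entropy T c <= d_entropy T d)%E.
Proof.
move=> H; apply: ge_ereal_sup => _ [eps e0 <-].
have [delta d0 hd] := H eps e0.
apply: (le_trans (esup_mono _ _ (fun n => rate_mono T d c n e0 hd))).
apply: ereal_sup_ubound; by exists delta.
Qed.
End S.

Section U.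
Variables (R : realType).

Lemma seq_min (I : eqType) (s : seq (I * R)) : (forall p, p \in s -> 0 < p.2) ->
  exists2 delta : R, 0 < delta & forall p, p \in s -> delta <= p.2.
Proof.
elim: s => [|q s IH] H; first by exists 1.
have [dl dl0 hdl] := IH (fun p ps => H p (mem_behead (s:=q :: s) ps)).
have q0 : 0 < q.2 by apply: H; rewrite mem_head.
exists (Order.min dl q.2); first by rewrite lt_min dl0 q0.
move=> p; rewrite inE => /orP[/eqP ->|ps]; first by rewrite ge_min lexx orbT.
by rewrite ge_min hdl.
Qed.

Lemma ball_open (Y : topologicalType) (m : Y -> Y -> R) y r :
  compatible_metric m -> open [set z | m y z < r].
Proof.
move=> [[m0 m1 ms mt] mo]; apply/mo => z /= hz.
exists (r - m y z); first by rewrite subr_gt0.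
move=> w /= hw; apply: le_lt_trans (mt y z w) _.
by rewrite -ltrBrDl.
Qed.

Lemma unif (Y : topologicalType) (dt ct : Y -> Y -> R) :
  compact [set: Y] -> compatible_metric dt -> compatible_metric ct ->
  forall eps, 0 < eps -> exists2 delta, 0 < delta &
    forall a b, dt a b < delta -> ct a b < eps.
Proof.
move=> cY hd hc eps e0.
have e20 : 0 < eps / 2 by rewrite divr_gt0.
have loc y : exists2 r : R, 0 < r &
    [set z | dt y z < r] `<=` [set z | ct y z < eps / 2].
  have := @ball_open Y ct y (eps / 2) hc; move: (hd) => [_ /(_ [set z | ct y z < eps / 2]) [H _]].
  move=> /H; apply => /=.
  by case: hc => [[_ h0 _ _] _]; have -> : ct y y = 0 by apply/h0.
have hdd := hd; have hcc := hc.
case: hd => [[d0 d1 dts dtt] hdo]; case: hc => [[c0 c1 cts ctt] hco].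
have H : forall x, [set: Y] x -> \forall x' \near x & n \near \oo,
   (fun n x' => forall b, dt x' b < n.+1%:R^-1 -> ct x' b < eps) n x'.
  move=> x _; have [r r0 hr] := loc x.
  have r20 : 0 < r / 2 by rewrite divr_gt0.
  exists ([set z | dt x z < r / 2], [set n : nat | n.+1%:R^-1 < r / 2]).
    split => /=.
      apply: open_nbhs_nbhs; split; first exact: (@ball_open Y dt x (r / 2) hdd).
      by rewrite /= (_ : dt x x = 0) //; apply/d1.
    exact: (near_infty_natSinv_lt (PosNum r20)).
  move=> [x' n] [/= hx hn] b hb.
  have hxb : ct x b < eps / 2.
    apply: hr => /=; apply: le_lt_trans (dtt x x' b) _.
    by rewrite (splitr r); apply: ltrD => //; exact: lt_trans hb hn.
  have hxx : ct x x' < eps / 2.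
    apply: hr => /=; apply: lt_trans hx _; rewrite ltr_pdivrMr // ltr_pMr //.
    by rewrite ltr1n.
  apply: le_lt_trans (ctt x' x b) _; rewrite cts.
  by rewrite (splitr eps); apply: ltrD.
have HH := (proj1 (compact_near_coveringP [set: Y])) cY nat \oo
  (fun n x' => forall b, dt x' b < n.+1%:R^-1 -> ct x' b < eps) _ H.
have [n Hn] := filter_ex (HH _).
exists n.+1%:R^-1; first by rewrite invr_gt0 ltr0n.
by move=> a b; apply: Hn.
Qed.
End U.

Theorem corollary2p29 (R : realType) (X Y : topologicalType) (e : X -> Y)
  (T : X -> X) (dt ct : Y -> Y -> R) :
  compactification e ->
  continuous T ->
  compatible_metric dt ->
  compatible_metric ct ->
  d_entropy T (fun x y => dt (e x) (e y)) = d_entropy T (fun x y => ct (e x) (e y)).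
Proof.
move=> [cY _ _] _ hd hc; apply/eqP; rewrite eq_le; apply/andP; split.
- apply: entropy_mono => eps e0.
  have [delta d0 H] := @unif R Y _ _ cY hc hd eps e0.
  by exists delta => // x y; apply: H.
- apply: entropy_mono => eps e0.
  have [delta d0 H] := @unif R Y _ _ cY hd hc eps e0.
  by exists delta => // x y; apply: H.
Qed.
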